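(* Let $M_C$ be a deterministic classical Turing machine operating in time $f(n)$, where $n$ is the input size. Then there exists a (one-tape) classically-controlled quantum Turing machine $M_Q$ operating in time $O(f(n))$ such that for every input $x$, $M_C(x)=M_Q(\ket{x})$; here, when $M_C$ halts in the halting state $h$, this equality is to be read as $M_Q(\ket{x})=\ket{M_C(x)}$ (the final state of the quantum tape is the basis state encoding the final classical tape contents).
   Context: A deterministic Turing machine (TM) is a triple $M=(K,\Sigma,\delta)$: $K$ finite set of states with initial state $s$, $\Sigma$ finite alphabet containing a blank $\#$, and $\delta: K\times\Sigma\to (K\cup\{\text{yes},\text{no},h\})\times\Sigma\times\{\leftarrow,\rightarrow,-\}$, where yes, no, $h$ (halting states) are not in $K$. Its output $M(x)$ is yes or no if that state is reached, and the final tape contents if $h$ is reached. A (one-tape) classically-controlled quantum Turing machine (CQTM) is a quintuple $M=(K,\Sigma_C,\Sigma_Q,\mathcal A,\delta)$. $K$ is a finite set of classical states with initial state $s$; $\Sigma_Q$ is a finite alphabet containing a blank $\#$, whose symbols label an orthonormal basis $\{\ket{\tau}:\tau\in\Sigma_Q\}$ of the Hilbert space $\mathbb C^{|\Sigma_Q|}$ of each quantum cell of an infinite tape; $\Sigma_C$ is a finite alphabet of classical outcomes containing $\#$ and $\overline{\#}$; $\mathcal A$ is a finite set of one-cell admissible transformations, each being a family $\{M_c\}_{c}$ of linear operators on $\mathbb C^{|\Sigma_Q|}$ with $\sum_c M_c^\dagger M_c=\mathrm{Id}$ and all outcomes $c\in\Sigma_C$, and $\mathcal A$ contains the blank test $\mathcal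 T_\#=\{M_\#=\ket{\#}\bra{\#},\,M_{\overline\#}=I-\ket{\#}\bra{\#}\}$; and $\delta:K\times\Sigma_C\to(K\cup\{\text{yes},\text{no},h\})\times\{\leftarrow,\rightarrow,-\}\times\mathcal A$ is a total classical transition function. If the machine is in state $q$ with last outcome $\tau$ and $\delta(q,\tau)=(p,D,A)$, the head moves according to $D$, then $A=\{M_c\}$ is applied to the pointed cell: if the tape state is $\ket\psi$, outcome $c$ occurs with probability $\bra\psi M_c^\dagger M_c\ket\psi$ (with $M_c$ acting on the pointed cell) and the tape becomes $M_c\ket\psi$ normalized; the new state is $p$ and the last outcome is $c$. Each transition is one time step. Initially the input state (a superposition of basis states $\ket{\tau}$ with $\tau\in(\Sigma_Q\setminus\{\#\})^n$) occupies $n$ adjacent cells, all other cells are in $\ket{\#}$, the head points at the blank cell immediately left of the input, the state is $s$ and the last outcome is taken to be $\#$. The machine halts upon reaching yes, no, or $h$; the output is yes/no respectively, or, on $h$, the state of the tape segment from the leftmost cell not in $\ket\#$ to the rightmost cell not in $\ket\#$. *)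

(* Defs.v *)
From mathcomp Require Import all_boot all_order all_algebra.
Set Implicit Arguments. Unset Strict Implicit. Unset Printing Implicit Defensive.
Import Order.TTheory GRing.Theory Num.Theory.
Local Open Scope ring_scope.

Inductive halt := HYes | HNo | HH.
Inductive dir := DL | DR | DS.
Inductive output (S : Type) := OYes | ONo | OTape of seq S.
Arguments OYes {S}. Arguments ONo {S}.

Definition move (p : int) (D : dir) : int :=
  match D with DL => p - 1 | DR => p + 1 | DS => p end.

Definition place (T : Type) (b : T) (w : seq T) (k : int) : int -> T :=
  fun i => if (k <= i) && (i < k + (size w)%:Z) then nth b w (absz (i - k)) else b.

Definition trimmed (T : eqType) (b : T) (w : seq T) : bool :=
  (w == [::]) || ((head b w != b) && (last b w != b)).

Record TM (S : finType) := MkTM {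
  tm_K : finType;
  tm_s : tm_K;
  tm_delta : tm_K -> S -> (tm_K + halt) * S * dir }.

Section Classical.
Variables (S : finType) (blank : S) (M : TM S).

Definition cconfig := ((tm_K M + halt) * int * (int -> S))%type.

Definition cstep (cf : cconfig) : cconfig :=
  let '(st, h, tp) := cf in
  match st with
  | inl q => let '(p, a, D) := tm_delta q (tp h) in
             (p, move h D, fun i => if i == h then a else tp i)
  | inr _ => cf
  end.

Definition cinit (x : seq S) : cconfig := (inl (tm_s M), 0, place blank x 1).

Definition crun (x : seq S) (T : nat) : cconfig := iter T cstep (cinit x).

Definition chalted (cf : cconfig) : bool :=
  match cf.1.1 with inr _ => true | inl _ => false end.

Definition is_input (x : seq S) : bool := all (fun a => a != blank) x.

Definition runs_in_time (f : nat -> nat) : Prop :=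
  forall x, is_input x -> exists T, (T <= f (size x))%N /\ chalted (crun x T).

Definition tm_output (x : seq S) (o : output S) : Prop :=
  exists T, let '(st, _, tp) := crun x T in
  match st, o with
  | inr HYes, OYes => True
  | inr HNo, ONo => True
  | inr HH, OTape w => trimmed blank w /\ exists k, forall i, tp i = place blank w k i
  | _, _ => False
  end.
End Classical.

(* amplitudes in an algebraically closed numeric field C (e.g. complex numbers);
   a one-cell operator is a matrix m with  m s t = <s| m |t>. *)
Record CQTM (C : numClosedFieldType) (SQ : finType) := MkCQTM {
  q_K : finType;
  q_s : q_K;
  q_SC : finType;
  q_cb : q_SC;
  q_cnb : q_SC;
  q_A : finType;                  (* index set of the finite set A *)
  q_op : q_A -> q_SC -> SQ -> SQ -> C;
  q_delta : q_K -> q_SC -> (q_K + halt) * dir * q_A }.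

Section Quantum.
Variables (C : numClosedFieldType) (SQ : finType) (bQ : SQ) (M : CQTM C SQ).

Definition admissible (m : q_SC M -> SQ -> SQ -> C) : Prop :=
  forall t1 t2 : SQ,
    \sum_(c : q_SC M) \sum_(s : SQ) (m c s t1)^* * m c s t2 = (t1 == t2)%:R.

Definition blank_test (c : q_SC M) (s t : SQ) : C :=
  if c == q_cb M then ((s == bQ) && (t == bQ))%:R
  else if c == q_cnb M then ((s == t) && (s != bQ))%:R else 0.

Definition cqtm_valid : Prop :=
  [/\ q_cb M != q_cnb M,
      forall a, admissible (q_op a) &
      exists a0, forall c s t, q_op a0 c s t = blank_test c s t].

(* Semantics on a finite window of cells -N..N (index j <-> position j - N).
   Cells outside the window are |#> and never touched as long as the head
   stays inside; a branch whose head leaves the window is discarded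
   (counted with mass 0). *)
Section Window.
Variable N : nat.
Definition wtape := {ffun 'I_(N.*2.+1) -> SQ}.
Definition qstate := wtape -> C.

Definition pos_idx (p : int) : option 'I_(N.*2.+1) :=
  if (0 <= p + N%:Z) then insub (absz (p + N%:Z)) else None.

Definition apply_cell (m : SQ -> SQ -> C) (i : 'I_(N.*2.+1)) (psi : qstate) : qstate :=
  fun t => \sum_(s : SQ) m (t i) s * psi [ffun j => if j == i then s else t j].

Definition norm2 (psi : qstate) : C := \sum_(t : wtape) `|psi t| ^+ 2.

Definition strip (w : seq SQ) : seq SQ :=
  let w1 := drop (find (fun a => a != bQ) w) w in
  rev (drop (find (fun a => a != bQ) (rev w1)) (rev w1)).

Definition wcontents (t : wtape) : seq SQ := [seq t j | j <- enum 'I_(N.*2.+1)].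

Definition tape_out_ok (psi : qstate) (w : seq SQ) : bool :=
  [exists t : wtape, [forall t' : wtape, (t' != t) ==> (psi t' == 0)]
                     && (strip (wcontents t) == w)].

Definition out_ok (o : output SQ) (hs : halt) (psi : qstate) : bool :=
  match o, hs with
  | OYes, HYes => true
  | ONo, HNo => true
  | OTape w, HH => tape_out_ok psi w
  | _, _ => false
  end.

(* total probability of the branches that halt within T steps with output o;
   psi is the unnormalized tape state of the branch, so its probability is
   norm2 psi *)
Fixpoint qmass (o : output SQ) (T : nat) (st : q_K M + halt) (c : q_SC M)
    (p : int) (psi : qstate) {struct T} : C :=
  match st with
  | inr hs => if out_ok o hs psi then norm2 psi else 0
  | inl q =>
    match T with
    | 0 => 0
    | T'.+1 =>
      let '(st', D, a) := q_delta q c in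
      let p' := move p D in
      match pos_idx p' with
      | None => 0
      | Some i => \sum_(c' : q_SC M) qmass o T' st' c' p' (apply_cell (q_op a c') i psi)
      end
    end
  end.
End Window.

Definition qprob (x : seq SQ) (o : output SQ) (T : nat) : C :=
  let N := (T + size x).+1 in
  let t0 : wtape N := [ffun j => place bQ x 1 ((nat_of_ord j)%:Z - N%:Z)] in
  qmass o T (inl (q_s M)) (q_cb M) 0 (fun t => (t == t0)%:R).
End Quantum.

Definition map_output (S T : Type) (g : S -> T) (o : output S) : output T :=
  match o with OYes => OYes | ONo => ONo | OTape w => OTape (map g w) end.

(* Main.v *)
Require Import Defs.
From mathcomp Require Import all_boot all_order all_algebra.
From mathcomp Require Import zify ring lra.
From Stdlib Require Import FunctionalExtensionality.
Set Implicit Arguments. Unset Strict Implicit. Unset Printing Implicit Defensive.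
Import Order.TTheory GRing.Theory Num.Theory.
Local Open Scope ring_scope.

Section Sim.
Variables (C : numClosedFieldType) (S : finType) (blank : S) (MC : TM S).

Definition dir_of (e : option bool) : dir :=
  match e with None => DS | Some false => DL | Some true => DR end.
Definition enc (D : dir) : option bool :=
  match D with DS => None | DL => Some false | DR => Some true end.
Lemma dir_ofK D : dir_of (enc D) = D. Proof. by case: D. Qed.

Definition KQ := (tm_K MC + (tm_K MC * option bool))%type.
Definition AQ := option (option S).

Definition qop (a : AQ) (c : option S) (s t : S) : C :=
  match a with
  | None => if c == Some blank then ((s == blank) && (t == blank))%:R
            else if c == None then ((s == t) && (s != blank))%:R else 0
  | Some None => match c with Some c => ((s == c) && (t == c))%:R | None => 0 end
  | Some (Some b) => match c with Some c => ((s == b) && (t == c))%:R | None => 0 end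
  end.

Definition qdelta (k : KQ) (c : option S) : (KQ + halt) * dir * AQ :=
  match k with
  | inl q => match c with
    | Some a => let '(p, b, D) := tm_delta q a in
        match p with
        | inl p' => (inl (inr (p', enc D)), DS, Some (Some b))
        | inr hs => (inr hs, DS, Some (Some b))
        end
    | None => (inr HNo, DS, None)
    end
  | inr (p', e) => (inl (inl p'), dir_of e, Some None)
  end.

Definition MQ : CQTM C S :=
  @MkCQTM C S (KQ : finType) (inl (tm_s MC)) (option S : finType) (Some blank) None
     (AQ : finType) qop qdelta.

Lemma big_opt (R : nmodType) (T : finType) (F : option T -> R) :
  \sum_(c : option T) F c = F None + \sum_(x : T) F (Some x).
Proof.
rewrite (bigD1 None) //=; congr (_ + _).
rewrite (reindex_omap Some id) /=; last by case.
by apply: eq_bigl => x; rewrite eqxx.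
Qed.

Lemma sum_sel (T : finType) (b : T) (P : T -> bool) :
  \sum_(s : T) ((s == b) && P s)%:R = (P b)%:R :> C.
Proof.
rewrite (bigD1 b) //= eqxx big1 ?addr0 // => s /negbTE -> //.
Qed.

Lemma cnat_mul (a b : bool) : (a%:R)^* * (b%:R) = (a && b)%:R :> C.
Proof. by rewrite conjC_nat -natrM mulnb. Qed.

Lemma qop_adm a : admissible (M := MQ) (qop a).
Proof.
move=> t1 t2; rewrite big_opt /=.
case: a => [[b|]|] /=.
- rewrite big1 ?add0r; last by move=> s _; rewrite mulr0.
  under eq_bigr => x _ do under eq_bigr => s _ do
    rewrite cnat_mul andbACA andbb.
  under eq_bigr => x _ do rewrite sum_sel.
  under eq_bigr => x _ do rewrite eq_sym (eq_sym t2 x).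
  by rewrite sum_sel.
- rewrite big1 ?add0r; last by move=> s _; rewrite mulr0.
  under eq_bigr => x _ do under eq_bigr => s _ do
    rewrite cnat_mul andbACA andbb.
  under eq_bigr => x _ do rewrite sum_sel.
  under eq_bigr => x _ do rewrite eq_sym (eq_sym t2 x).
  by rewrite sum_sel.
- under eq_bigr => s _ do rewrite cnat_mul -andbA.
  rewrite sum_sel.
  have E : forall x : S, \sum_s (if Some x == Some blank
        then ((s == blank) && (t1 == blank))%:R else 0)^* *
       (if Some x == Some blank then ((s == blank) && (t2 == blank))%:R else 0)
       = ((x == blank) && ((t1 == blank) && (t2 == blank)))%:R :> C.
    move=> x; case: (x =P blank) => [->|/eqP nx] /=.
      rewrite eqxx; under eq_bigr => s _ do rewrite cnat_mul andbACA andbb.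
      by rewrite sum_sel.
    have -> : (Some x == Some blank) = false by apply/negbTE.
    by rewrite big1 // => s _; rewrite mulr0.
  under eq_bigr => x _ do rewrite E.
  rewrite sum_sel.
  case: (t1 =P blank) => [->|/eqP n1]; case: (t2 =P blank) => [->|/eqP n2] /=;
    rewrite ?eqxx ?andbF ?andbT ?add0r ?addr0 //.
  by rewrite eq_sym (negbTE n2).
Qed.

Lemma MQ_valid : cqtm_valid blank MQ.
Proof.
split => //.
- exact: qop_adm.
- by exists None.
Qed.

Section Win.
Variable N : nat.
Local Notation I := 'I_(N.*2.+1).

Definition delta (t : wtape S N) : qstate C S N := fun t' => (t' == t)%:R.
Definition upd (t : wtape S N) (i : I) (b : S) : wtape S N :=
  [ffun j => if j == i then b else t j].

Lemma apply_basis (m : S -> S -> C) i t :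
  apply_cell m i (delta t) =
  fun t' => if [forall j, (j != i) ==> (t' j == t j)] then m (t' i) (t i) else 0.
Proof.
apply: functional_extensionality => t'; rewrite /apply_cell /delta.
rewrite (bigD1 (t i)) //= big1 ?addr0; last first.
  move=> s ns; have -> : ([ffun j => if j == i then s else t' j] == t) = false.
    apply/negbTE; apply: contra ns => /eqP <-; by rewrite ffunE eqxx.
  by rewrite mulr0.
case: ifP => H.
  have -> : [ffun j => if j == i then t i else t' j] == t.
    apply/eqP/ffunP => j; rewrite ffunE; case: ifP => [/eqP -> //|/negbT nj].
    by move/forallP: H => /(_ j); rewrite nj => /eqP.
  by rewrite mulr1.
have -> : ([ffun j => if j == i then t i else t' j] == t) = false.
  apply/negbTE; apply: contraFN H => /eqP E; apply/forallP => j; apply/implyP => nj.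
  by rewrite -E ffunE (negbTE nj).
by rewrite mulr0.
Qed.

Lemma eq_upd (t t' : wtape S N) i b :
  (t' == upd t i b) = (t' i == b) && [forall j, (j != i) ==> (t' j == t j)].
Proof.
apply/eqP/andP => [->|[/eqP H1 /forallP H2]].
  rewrite ffunE eqxx; split => //; apply/forallP => j; apply/implyP => nj.
  by rewrite ffunE (negbTE nj).
apply/ffunP => j; rewrite ffunE; case: ifP => [/eqP -> //|/negbT nj].
by move: (H2 j); rewrite nj => /eqP.
Qed.

Lemma upd_id (t : wtape S N) i : upd t i (t i) = t.
Proof. by apply/ffunP => j; rewrite ffunE; case: ifP => // /eqP ->. Qed.

Lemma apply_write i t b a :
  apply_cell (qop (Some (Some b)) (Some a)) i (delta t) =
  if t i == a then delta (upd t i b) else (fun _ => 0).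
Proof.
rewrite apply_basis; apply: functional_extensionality => t' /=.
case: (t i =P a) => [_|na]; rewrite ?andbT ?andbF.
  by rewrite /delta eq_upd; case: ifP; case: (t' i == b); rewrite ?andbF.
by case: ifP.
Qed.

Lemma apply_meas i t a :
  apply_cell (qop (Some None) (Some a)) i (delta t) =
  if t i == a then delta t else (fun _ => 0).
Proof.
case: (t i =P a) => [E|na].
  rewrite apply_basis E; apply: functional_extensionality => t' /=.
  rewrite eqxx andbT /delta -[X in (t' == X)](upd_id t i) eq_upd E.
  by case: (t' i == a); case: [forall j, _].
rewrite apply_basis; apply: functional_extensionality => t' /=.
have -> : (t i == a) = false by apply/negbTE/eqP.
by rewrite andbF; case: ifP.
Qed.

Lemma apply_zero_op (m : S -> S -> C) (i : I) (psi : qstate C S N) :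
  (forall s t, m s t = 0) -> apply_cell m i psi = (fun _ => 0).
Proof.
move=> H; apply: functional_extensionality => t'; rewrite /apply_cell.
by rewrite big1 // => s _; rewrite H mul0r.
Qed.

Lemma qmass0 o T st c p :
  qmass blank (M := MQ) o T st c p (fun _ : wtape S N => 0) = 0.
Proof.
elim: T st c p => [|T IH] [q|hs] c p /=.
- by [].
- rewrite /norm2 big1; first by case: ifP.
  by move=> t _; rewrite normr0 expr0n.
- case: (qdelta q c) => [[st' D] a]; case: (pos_idx N (move p D)) => // i.
  rewrite big1 // => c' _.
  have -> : apply_cell (qop a c') i (fun _ : wtape S N => 0) = (fun _ => 0).
    apply: functional_extensionality => t'; rewrite /apply_cell.
    by rewrite big1 // => s _; rewrite mulr0.
  exact: IH.
- rewrite /norm2 big1; first by case: ifP.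
  by move=> t _; rewrite normr0 expr0n.
Qed.

Lemma collapse_write o T st' p' i t b :
  \sum_(c' : option S) qmass blank (M:=MQ) o T st' c' p'
      (apply_cell (qop (Some (Some b)) c') i (delta t))
  = qmass blank (M:=MQ) o T st' (Some (t i)) p' (delta (upd t i b)).
Proof.
rewrite big_opt apply_zero_op // qmass0 add0r.
rewrite (bigD1 (t i)) //= apply_write eqxx big1 ?addr0 // => x nx.
rewrite apply_write; have -> : (t i == x) = false by rewrite eq_sym (negbTE nx).
exact: qmass0.
Qed.

Lemma collapse_meas o T st' p' i t :
  \sum_(c' : option S) qmass blank (M:=MQ) o T st' c' p'
      (apply_cell (qop (Some None) c') i (delta t))
  = qmass blank (M:=MQ) o T st' (Some (t i)) p' (delta t).
Proof.
rewrite big_opt apply_zero_op // qmass0 add0r.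
rewrite (bigD1 (t i)) //= apply_meas eqxx big1 ?addr0 // => x nx.
rewrite apply_meas; have -> : (t i == x) = false by rewrite eq_sym (negbTE nx).
exact: qmass0.
Qed.

Lemma qmass_step o T q c p (psi : qstate C S N) st' D a :
  qdelta q c = (st', D, a) ->
  qmass blank (M:=MQ) o T.+1 (inl q) c p psi =
  match pos_idx N (move p D) with
  | None => 0
  | Some i => \sum_(c' : option S)
       qmass blank (M:=MQ) o T st' c' (move p D) (apply_cell (qop a c') i psi)
  end.
Proof. by move=> /= ->. Qed.

Lemma pos_some (p : int) : - N%:Z <= p -> p <= N%:Z -> exists i, pos_idx N p = Some i.
Proof.
move=> h1 h2; rewrite /pos_idx.
have h0 : 0 <= p + N%:Z by lia.
have hl : (absz (p + N%:Z)%R < N.*2.+1)%N by lia.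
by rewrite h0 insubT; eexists.
Qed.

Lemma pos_val (p : int) (i : I) : pos_idx N p = Some i -> p = (i : nat)%:Z - N%:Z.
Proof.
rewrite /pos_idx; case: ifP => // h0.
case: insubP => // u _ hu [<-]; rewrite hu; lia.
Qed.

Lemma pos_of (i : I) : pos_idx N ((i : nat)%:Z - N%:Z) = Some i.
Proof.
rewrite /pos_idx.
have h0 : 0 <= (i : nat)%:Z - N%:Z + N%:Z by lia.
have e : absz ((i : nat)%:Z - N%:Z + N%:Z)%R = i by lia.
rewrite h0 e; exact: valK.
Qed.

Definition inv (tp : int -> S) (t : wtape S N) :=
  forall p, tp p = match pos_idx N p with Some j => t j | None => blank end.

Lemma inv_write tp t h i b :
  inv tp t -> pos_idx N h = Some i ->
  inv (fun x => if x == h then b else tp x) (upd t i b).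
Proof.
move=> H Hi x; case: (x =P h) => [->|nx]; first by rewrite Hi ffunE eqxx.
rewrite H; case E: (pos_idx N x) => [j|] //; rewrite ffunE.
case: (j =P i) => // ji; exfalso; apply: nx.
by rewrite (pos_val E) (pos_val Hi) ji.
Qed.

Lemma norm2_delta t : norm2 (delta t) = 1.
Proof.
rewrite /norm2 (bigD1 t) //= /delta eqxx normr1 expr1n big1 ?addr0 // => x nx.
by rewrite (negbTE nx) normr0 expr0n.
Qed.

Lemma iter_halt k hs h tp :
  iter k (@cstep S MC) (inr hs, h, tp) = (inr hs, h, tp).
Proof. by elim: k => //= k ->. Qed.

Lemma sim o k : forall TQ q h tp t hs h' tp',
  inv tp t -> - N%:Z + k%:Z <= h -> h + k%:Z <= N%:Z -> (2 * k + 1 <= TQ)%N ->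
  iter k (@cstep S MC) (inl q, h, tp) = (inr hs, h', tp') ->
  exists t', inv tp' t' /\
    qmass blank (M:=MQ) o TQ (inl (inl q)) (Some (tp h)) h (delta t)
    = (if out_ok blank o hs (delta t') then 1 else 0).
Proof.
elim: k => [|k IH] TQ q h tp t hs h' tp' Hi H1 H2 HT Hit; first by [].
move: Hit; rewrite iterSr /=.
case Ed: (tm_delta q (tp h)) => [[p b] D].
have [i Hpi] : exists i, pos_idx N h = Some i by apply: pos_some; lia.
have Hi1 := inv_write b Hi Hpi.
case: TQ HT => [|TQ] HT; first lia.
case: p Ed => [p'|hs0] Ed Hit.
- rewrite (@qmass_step o TQ (inl q) (Some (tp h)) h (delta t) (inl (inr (p', enc D))) DS (Some (Some b)));
    last by rewrite /= Ed.
  change (move h DS) with h; rewrite Hpi collapse_write.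
  case: TQ HT => [|TQ] HT; first lia.
  have [i' Hpi'] : exists i', pos_idx N (move h D) = Some i'.
    by apply: pos_some; case: D {Hit Ed} => /=; lia.
  rewrite (@qmass_step o TQ (inr (p', enc D)) (Some (t i)) h (delta (upd t i b)) (inl (inl p')) D (Some None));
    last by rewrite /= dir_ofK.
  rewrite Hpi' collapse_meas.
  have -> : upd t i b i' = (fun x => if x == h then b else tp x) (move h D).
    by rewrite Hi1 Hpi'.
  apply: (IH TQ p' (move h D) (fun x => if x == h then b else tp x) (upd t i b) hs h' tp' Hi1 _ _ _ Hit).
  + by case: D {Hit Ed Hpi'} => /=; lia.
  + by case: D {Hit Ed Hpi'} => /=; lia.
  + lia.
- move: Hit; rewrite iter_halt => -[<- _ <-].
  exists (upd t i b); split => //.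
  rewrite (@qmass_step o TQ (inl q) (Some (tp h)) h (delta t) (inr hs0) DS (Some (Some b)));
    last by rewrite /= Ed.
  change (move h DS) with h; rewrite Hpi collapse_write /=.
  by case: TQ {HT} => [|TQ] /=; rewrite norm2_delta.
Qed.

Lemma in_window tp t p : inv tp t -> tp p != blank -> - N%:Z <= p /\ p <= N%:Z.
Proof.
move=> Hi; rewrite Hi; case E: (pos_idx N p) => [j|]; last by rewrite eqxx.
move=> _; rewrite (pos_val E); have := ltn_ord j; lia.
Qed.
End Win.

Lemma iter_stable a j (c : cconfig MC) :
  chalted (iter a (@cstep S MC) c) -> iter (j + a) (@cstep S MC) c = iter a (@cstep S MC) c.
Proof.
rewrite iterD; case: (iter a _ c) => [[[q|hs] h] tp] //= _.
exact: iter_halt.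
Qed.
End Sim.
Lemma strip_nseq (T : finType) (b : T) n : strip b (nseq n b) = [::].
Proof.
rewrite /strip.
have -> : find (fun a => a != b) (nseq n b) = n.
  elim: n => //= n ->; by rewrite eqxx.
by rewrite [drop n _]drop_oversize ?size_nseq.
Qed.

Lemma strip_mid (T : finType) (b : T) a r (w : seq T) :
  w != [::] -> head b w != b -> last b w != b ->
  strip b (nseq a b ++ w ++ nseq r b) = w.
Proof.
move=> wn hw lw; rewrite /strip.
have f1 : find (fun x => x != b) (w ++ nseq r b) = 0%N.
  by case: w wn hw {lw} => //= x w' _ ->.
rewrite find_cat has_nseq eqxx andbF size_nseq f1 addn0 drop_size_cat ?size_nseq //.
rewrite rev_cat rev_nseq find_cat has_nseq eqxx andbF size_nseq.
have f2 : find (fun x => x != b) (rev w) = 0%N.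
  by case/lastP: w wn lw {hw f1} => //= w'' l _; rewrite last_rcons rev_rcons /= => ->.
by rewrite f2 addn0 drop_size_cat ?size_nseq // revK.
Qed.

Lemma map_blank (T : Type) (b : T) (G : nat -> T) (s : seq nat) :
  (forall x, x \in s -> G x = b) -> map G s = nseq (size s) b.
Proof.
elim: s => //= x s IH H; rewrite H ?mem_head // IH // => y ys.
by apply: H; rewrite in_cons ys orbT.
Qed.

Lemma strip_place (T : finType) (b : T) (w : seq T) (k : int) (N m : nat) :
  trimmed b w ->
  (w != [::] -> - N%:Z <= k /\ k + (size w)%:Z <= m%:Z - N%:Z) ->
  strip b [seq place b w k (n%:Z - N%:Z) | n <- iota 0 m] = w.
Proof.
move=> tw Hb.
case: (w =P [::]) => [E|/eqP wn].
  rewrite E (map_blank (b:=b)) ?strip_nseq // => x _.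
  by rewrite /place /=; case: ifP => //; lia.
move: tw; rewrite /trimmed (negbTE wn) /= => /andP [hw lw].
have [Hk1 Hk2] := Hb wn.
set a := absz (k + N%:Z).
have Ea : a%:Z = k + N%:Z by rewrite /a; lia.
have Hm : m = (a + (size w + (m - a - size w)))%N by lia.
rewrite Hm !iotaD !map_cat add0n.
rewrite (map_blank (b:=b)); last first.
  move=> x; rewrite mem_iota => /andP [_ hx]; rewrite /place.
  case: ifP => //; lia.
rewrite [in X in _ ++ (_ ++ X)](map_blank (b:=b)); last first.
  move=> x; rewrite mem_iota => /andP [hx _]; rewrite /place.
  case: ifP => //; lia.
have -> : [seq place b w k (n%:Z - N%:Z) | n <- iota (0 + a) (size w)] = w.
  apply: (@eq_from_nth _ b); rewrite size_map size_iota //.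
  move=> i hi; rewrite (nth_map 0%N) ?size_iota // nth_iota // /place.
  case: ifP; last lia.
  move=> _; congr nth; lia.
by rewrite !size_iota strip_mid.
Qed.

Theorem theorem1 (C : numClosedFieldType) (S : finType) (blank : S)
    (MC : TM S) (f : nat -> nat) :
  runs_in_time blank MC f ->
  exists (SQ : finType) (bQ : SQ) (iota : S -> SQ),
    [/\ injective iota, iota blank = bQ &
    exists (MQ : CQTM C SQ) (c : nat),
      cqtm_valid bQ MQ /\
      forall x : seq S, is_input blank x ->
      forall o : output S, tm_output blank MC x o ->
        qprob bQ MQ (map iota x) (map_output iota o) (c * f (size x) + c)%N = 1].
Proof.
move=> Hrun.
exists S, blank, id; split => //.
exists (MQ C blank MC), 2%N; split; first exact: MQ_valid.
move=> x xin o [T Hout].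
have -> : map id x = x := map_id x.
have -> : map_output id o = o by case: o {Hout} => //= w; rewrite map_id.
have [T0 [HT0 Hh0]] := Hrun x xin.
have ET : crun blank MC x T = crun blank MC x T0.
  have HhT : chalted (crun blank MC x T).
    by move: Hout; case: (crun blank MC x T) => [[[q|hs] h] tp].
  case: (leqP T T0) => HTT.
    by rewrite /crun -(subnK HTT) iter_stable.
  by rewrite /crun -(subnK (ltnW HTT)) iter_stable.
move: Hout; rewrite ET.
case E0: (crun blank MC x T0) => [[st0 h0] tp0].
case: st0 E0 => [q0|hs] E0; first by move: Hh0; rewrite E0.
move=> Hout.
set TQ := (2 * f (size x) + 2)%N.
set N := (TQ + size x).+1.
rewrite /qprob -/N.
set t0 := [ffun j : 'I_(N.*2.+1) => place blank x 1 ((j : nat)%:Z - N%:Z)].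
have Hinv : inv blank (place blank x 1) t0.
  move=> p; case E: (pos_idx N p) => [j|].
    by rewrite ffunE (pos_val E).
  rewrite /place; case: ifP => // /andP [h1 h2].
  have [j Hj] : exists j, pos_idx N p = Some j by apply: pos_some; lia.
  by rewrite E in Hj.
have [t' [Hi' Hq]] := @sim C S blank MC N o T0 TQ (tm_s MC) 0 (place blank x 1) t0 hs h0 tp0
   Hinv ltac:(lia) ltac:(lia) ltac:(lia) E0.
have P0 : place blank x 1 0 = blank.
  by rewrite /place; have -> : (1 <= 0 :> int) = false by [].
rewrite P0 in Hq.
change (qmass blank (M := MQ C blank MC) o TQ (inl (inl (tm_s MC))) (Some blank) 0 (delta C t0) = 1).
rewrite Hq.
suff -> : out_ok blank o hs (delta C t') by [].
clear Hq; case: hs E0 Hout; case: o => //= w E0 [tw [k Hk]].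
apply/existsP; exists t'; apply/andP; split.
  by apply/forallP => t''; apply/implyP => nt; rewrite /delta (negbTE nt).
apply/eqP.
have -> : wcontents t' = [seq place blank w k (n%:Z - N%:Z) | n <- iota 0 (N.*2.+1)].
  rewrite /wcontents -val_enum_ord -map_comp; apply: eq_map => j /=.
  by rewrite -Hk Hi' pos_of.
apply: strip_place => // wn.
move: tw; rewrite /trimmed (negbTE wn) /= => /andP [hw lw].
have A1 : tp0 k != blank.
  rewrite Hk /place; case: ifP; last first.
    by move=> H; exfalso; move: H; case: w wn {hw lw Hk} => //= a w' _; lia.
  by move=> _; rewrite subrr /= nth0.
have A2 : tp0 (k + (size w)%:Z - 1) != blank.
  rewrite Hk /place; case: ifP; last first.
    by move=> H; exfalso; move: H; case: w wn {hw lw Hk A1} => //= a w' _; lia.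
  move=> _.
  have -> : absz (k + (size w)%:Z - 1 - k)%R = (size w).-1 by case: w wn {hw lw Hk A1} => //= a w' _; lia.
  by rewrite nth_last.
have := in_window Hi' A1; have := in_window Hi' A2.
case: w wn {hw lw Hk A1 A2} => //= a w' _; lia.
Qed.
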